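(* Let $\mathcal{K}^\star_{loc}$, $\{k\}$ and $\mathcal{K}_{g,user}$ be pairwise disjoint finite sets of keyframes, with weighted undirected edges (weights $w_e\geq1$) among $\mathcal{K}^\star_{loc}\cup\{k\}$ and between $\mathcal{K}^\star_{loc}\cup\{k\}$ and $\mathcal{K}_{g,user}$, such that the graph on $\mathcal{K}^\star_{loc}\cup\{k\}$ is connected, and let $\mathcal{I}$ be a symmetric positive definite $6\times6$ matrix with $\det\mathcal{I}\geq1$. For $F\subseteq\mathcal{K}_{g,user}$ define $$g(F)=\log\det\big(\tilde{\mathcal{I}}_{loc}(\mathcal{K}^\star_{loc}\cup\{k\},F)\big).$$ Then $g$ is non-negative, monotone nondecreasing, and submodular on $2^{\mathcal{K}_{g,user}}$; in particular the problem $\max_{F\subseteq\mathcal{K}_{g,user},|F|\leq l_f}g(F)$ is the maximization of a non-negative monotone submodular function under a cardinality constraint.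
   Context: For disjoint keyframe sets $\mathcal{K}_{loc}=\{r_1,\dots,r_L\}$ (ordered) and $\mathcal{K}_{fixed}$, $\tilde{\mathcal{I}}_{loc}(\mathcal{K}_{loc},\mathcal{K}_{fixed})=\tilde{\mathbf{L}}_{loc}\otimes\mathcal{I}$, where $\mathbf{L}_{loc}$ is the $L\times L$ matrix with $[\mathbf{L}_{loc}]_{i,j}=-\sum_{e\text{ between }r_i,r_j}w_e$ for $i\neq j$ and $[\mathbf{L}_{loc}]_{i,i}=\sum w_e$ over all edges joining $r_i$ to another node of $\mathcal{K}_{loc}\cup\mathcal{K}_{fixed}$, and $\tilde{\mathbf{L}}_{loc}$ is $\mathbf{L}_{loc}$ with its first row and column deleted; $\otimes$ is the Kronecker product. A set function $g$ is submodular if $g(L)+g(S)\geq g(L\cup S)+g(L\cap S)$ for all subsets $L,S$. *)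

(* Defs.v *)
From HB Require Import structures.
From mathcomp Require Import all_boot all_order all_algebra.
From mathcomp Require Import mxtens.
From mathcomp Require Import reals exp.
Set Implicit Arguments. Unset Strict Implicit. Unset Printing Implicit Defensive.
Import Order.TTheory GRing.Theory Num.Theory.
Local Open Scope ring_scope.

(* Vertices: local keyframes K*_loc ∪ {k}, ordered as r_1,...,r_{n+1}
   (type 'I_n.+1, r_1 = ord0), and user keyframes (finite type U).
   Disjointness is built in via the sum type. *)
Definition vtx (n : nat) (U : finType) := ('I_n.+1 + U)%type.

Definition joins (n : nat) (U : finType) (E : finType)
  (ends : E -> vtx n U * vtx n U) (e : E) (x y : vtx n U) : bool :=
  (((ends e).1 == x) && ((ends e).2 == y)) || (((ends e).1 == y) && ((ends e).2 == x)).

Definition wsum (R : realType) (n : nat) (U E : finType)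
  (ends : E -> vtx n U * vtx n U) (w : E -> R) (x y : vtx n U) : R :=
  \sum_(e : E | joins ends e x y) w e.

Definition is_local (n : nat) (U : finType) (v : vtx n U) : bool :=
  if v is inl _ then true else false.

Definition in_locF (n : nat) (U : finType) (F : {set U}) (v : vtx n U) : bool :=
  match v with inl _ => true | inr u => u \in F end.

Definition Lloc (R : realType) (n : nat) (U E : finType)
  (ends : E -> vtx n U * vtx n U) (w : E -> R) (F : {set U}) : 'M[R]_(n.+1) :=
  \matrix_(i, j)
    if i == j then \sum_(y : vtx n U | (y != inl i) && in_locF F y) wsum ends w (inl i) y
    else - wsum ends w (inl i) (inl j).

Definition Lloc_tilde (R : realType) (n : nat) (U E : finType)
  (ends : E -> vtx n U * vtx n U) (w : E -> R) (F : {set U}) : 'M[R]_n :=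
  \matrix_(i, j) Lloc ends w F (lift ord0 i) (lift ord0 j).

Definition Iloc_tilde (R : realType) (n : nat) (U E : finType)
  (ends : E -> vtx n U * vtx n U) (w : E -> R) (I : 'M[R]_6) (F : {set U})
  : 'M[R]_(n * 6) :=
  tensmx (Lloc_tilde ends w F) I.

Definition gfun (R : realType) (n : nat) (U E : finType)
  (ends : E -> vtx n U * vtx n U) (w : E -> R) (I : 'M[R]_6) (F : {set U}) : R :=
  ln (\det (Iloc_tilde ends w I F)).

Definition local_connected (n : nat) (U E : finType)
  (ends : E -> vtx n U * vtx n U) : Prop :=
  forall i j : 'I_n.+1,
    connect [rel a b : 'I_n.+1 | [exists e : E, joins ends e (inl a) (inl b)]] i j.

Definition submodular (U : finType) (R : realType) (g : {set U} -> R) : Prop :=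
  forall A B : {set U}, g (A :|: B) + g (A :&: B) <= g A + g B.

Definition monotone_nondecr (U : finType) (R : realType) (g : {set U} -> R) : Prop :=
  forall A B : {set U}, A \subset B -> g A <= g B.

Definition nonneg_fun (U : finType) (R : realType) (g : {set U} -> R) : Prop :=
  forall A : {set U}, 0 <= g A.

Definition sym_posdef (R : realType) (m : nat) (M : 'M[R]_m) : Prop :=
  M^T = M /\ forall v : 'rV[R]_m, v != 0 -> 0 < (v *m M *m v^T) 0 0.

(* Main.v *)
Require Import Defs.
From HB Require Import structures.
From mathcomp Require Import all_boot all_order all_algebra.
From mathcomp Require Import mxtens.
From mathcomp Require Import reals exp.
From mathcomp Require Import ring lra.
Set Implicit Arguments. Unset Strict Implicit. Unset Printing Implicit Defensive.
Import Order.TTheory GRing.Theory Num.Theory.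
Local Open Scope ring_scope.

Section Frame.
Variable R : realFieldType.

Definition qf m (Y : 'M[R]_m) (v : 'rV[R]_m) := (v *m Y *m v^T) 0 0.
Definition PD m (Y : 'M[R]_m) := forall v : 'rV[R]_m, v != 0 -> 0 < qf Y v.
Definition r1 m (s : R) (u : 'rV[R]_m) : 'M[R]_m := s *: (u^T *m u).

Lemma mx11_mulE (a b : 'M[R]_1) : (a *m b) 0 0 = a 0 0 * b 0 0.
Proof. by rewrite mxE big_ord1. Qed.

Lemma qfD m (Y P : 'M[R]_m) v : qf (Y + P) v = qf Y v + qf P v.
Proof. by rewrite /qf mulmxDr mulmxDl mxE. Qed.

Lemma qfZ m (c : R) (Y : 'M[R]_m) v : qf (c *: Y) v = c * qf Y v.
Proof. by rewrite /qf -scalemxAr -scalemxAl mxE. Qed.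

Lemma qfN m (Y : 'M[R]_m) v : qf (- Y) v = - qf Y v.
Proof. by rewrite /qf mulmxN mulNmx mxE. Qed.

Lemma qf0 m (v : 'rV[R]_m) : qf 0 v = 0.
Proof. by rewrite /qf mulmx0 mul0mx mxE. Qed.

Lemma tr11 (a : 'M[R]_1) : a^T 0 0 = a 0 0.
Proof. by rewrite mxE. Qed.

Lemma qf_r1 m s (u v : 'rV[R]_m) : qf (r1 s u) v = s * ((v *m u^T) 0 0) ^+ 2.
Proof.
rewrite /r1 qfZ /qf !mulmxA -(mulmxA (v *m u^T)) mx11_mulE; congr (_ * _).
rewrite expr2; congr (_ * _).
by rewrite -tr11 trmx_mul trmxK.
Qed.

Lemma qf_r1_ge0 m s (u v : 'rV[R]_m) : 0 <= s -> 0 <= qf (r1 s u) v.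
Proof. by move=> s0; rewrite qf_r1 mulr_ge0 // sqr_ge0. Qed.

Lemma det1_rank1 m (x : 'M[R]_(m, 1)) (y : 'M[R]_(1, m)) :
  \det (1%:M + x *m y) = 1 + (y *m x) 0 0.
Proof.
pose B1 := block_mx (1%:M : 'M[R]_m) 0 (- y) (1%:M : 'M_1).
pose B2 := block_mx (1%:M : 'M[R]_m) x 0 (1%:M + y *m x).
pose B3 := block_mx (1%:M + x *m y) x 0 (1%:M : 'M_1).
have E : B1 *m B2 = B3 *m B1.
  rewrite !mulmx_block !mul1mx !mulmx1 !mul0mx !mulmx0 !add0r !addr0.
  by rewrite mulNmx mulmxN (addrC 1%:M (y *m x)) addKr addrK.
have := congr1 determinant E; rewrite !det_mulmx.
rewrite /B1 /B2 /B3 det_lblock det_ublock det_ublock !det1 !mul1r mulr1.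
by rewrite mulr1 => <-; rewrite det_mx11 !mxE.
Qed.

Lemma unit_sub m (Y : 'M[R]_m) s (u : 'rV[R]_m) : Y \in unitmx ->
  Y + r1 s u = Y *m (1%:M + (s *: (invmx Y *m u^T)) *m u).
Proof.
move=> uY; rewrite mulmxDr mulmx1 !mulmxA -scalemxAr mulmxA mulmxV //.
by rewrite mul1mx /r1 scalemxAl.
Qed.

Lemma MDL m (Y : 'M[R]_m) s (u : 'rV[R]_m) : Y \in unitmx ->
  \det (Y + r1 s u) = \det Y * (1 + s * qf (invmx Y) u).
Proof.
move=> uY; rewrite unit_sub // det_mulmx det1_rank1; congr (_ * (1 + _)).
by rewrite /qf -scalemxAr mxE mulmxA.
Qed.



Lemma PD_unit m (Y : 'M[R]_m) : PD Y -> Y \in unitmx.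
Proof.
move=> H; rewrite unitmxE unitfE; apply/negP => /det0P [v nz vY].
by have := H v nz; rewrite /qf vY mul0mx mxE ltxx.
Qed.

Lemma PD_add m (Y P : 'M[R]_m) : PD Y -> (forall v, 0 <= qf P v) -> PD (Y + P).
Proof. by move=> H HP v nz; rewrite qfD ltr_wpDr // H. Qed.

Lemma row'01 m k (A : 'M[R]_(m.+1, k)) :
  row' ord0 (1%:M : 'M[R]_m.+1) *m A = row' ord0 A.
Proof.
apply/matrixP=> i j; rewrite !mxE; under eq_bigr do rewrite !mxE.
rewrite (bigD1 (lift ord0 i)) //= eqxx mul1r big1 ?addr0 // => l.
by rewrite eq_sym => /negbTE ->; rewrite mul0r.
Qed.

Lemma col'01 m k (A : 'M[R]_(k, m.+1)) :
  A *m (row' ord0 (1%:M : 'M[R]_m.+1))^T = col' ord0 A.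
Proof.
rewrite tr_row' trmx1.
apply/matrixP=> i j; rewrite !mxE; under eq_bigr do rewrite !mxE.
rewrite (bigD1 (lift ord0 j)) //= eqxx mulr1 big1 ?addr0 // => l.
by move=> /negbTE ->; rewrite mulr0.
Qed.

Lemma delta_qf m (A : 'M[R]_m) i j :
  ((delta_mx 0 i : 'rV[R]_m) *m A *m (delta_mx 0 j : 'rV[R]_m)^T) 0 0 = A i j.
Proof. by rewrite trmx_delta -rowE -colE !mxE. Qed.

Lemma PD_det_gt0 m (Y : 'M[R]_m) : PD Y -> 0 < \det Y.
Proof.
elim: m Y => [|m IH] Y HY; first by rewrite det_mx00.
pose R0 := row' ord0 (1%:M : 'M[R]_m.+1).
have hmin : R0 *m Y *m R0^T = row' ord0 (col' ord0 Y).
  by rewrite /R0 row'01 col'01; apply/matrixP=> i j; rewrite !mxE.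
have hRR : R0 *m R0^T = 1%:M.
  rewrite /R0 row'01; apply/matrixP=> i j; rewrite !mxE.
  by rewrite (inj_eq (@lift_inj _ ord0)) eq_sym.
have PDmin : PD (row' ord0 (col' ord0 Y)).
  move=> v nz; rewrite -hmin.
  have -> : qf (R0 *m Y *m R0^T) v = qf Y (v *m R0).
    by rewrite /qf trmx_mul !mulmxA.
  apply: HY; apply: contra nz => /eqP h.
  by rewrite -[v]mulmx1 -hRR mulmxA h mul0mx.
have dm := IH _ PDmin.
have uY := PD_unit HY.
pose e := delta_mx 0 (ord0 : 'I_m.+1) : 'rV[R]_m.+1.
have key s : \det (Y + r1 s e) = \det Y + s * \det (row' ord0 (col' ord0 Y)).
  rewrite MDL // /qf delta_qf /invmx uY !mxE /cofactor /= expr0 mul1r.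
  have nz : \det Y != 0 by rewrite -unitfE -unitmxE.
  by field.
have nz : \det Y != 0 by rewrite -unitfE -unitmxE.
case: (ltgtP (\det Y) 0) => // hneg; last by rewrite hneg eqxx in nz.
pose s0 := - \det Y / \det (row' ord0 (col' ord0 Y)).
have s0ge : 0 <= s0 by rewrite /s0 divr_ge0 // ?oppr_ge0 ?ltW.
have PD1 : PD (Y + r1 s0 e) by apply: PD_add => // v; apply: qf_r1_ge0.
have := PD_unit PD1; rewrite unitmxE unitfE key /s0.
by rewrite divfK ?(gt_eqF dm) // subrr eqxx.
Qed.



Lemma SM m (Y : 'M[R]_m) s (u : 'rV[R]_m) : Y \in unitmx ->
  1 + s * qf (invmx Y) u != 0 ->
  invmx (Y + r1 s u) = invmx Y - (s / (1 + s * qf (invmx Y) u)) *: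
                        (invmx Y *m u^T *m (u *m invmx Y)).
Proof.
move=> uY nz.
set Z := invmx Y; set a := qf Z u; set c := s / (1 + s * a).
set N := u^T *m u *m Z.
have h1 : u^T *m u *m (Z *m u^T *m (u *m Z)) = a *: N.
  have -> : u^T *m u *m (Z *m u^T *m (u *m Z)) =
            u^T *m (u *m Z *m u^T) *m (u *m Z) by rewrite !mulmxA.
  rewrite [u *m Z *m u^T]mx11_scalar mul_mx_scalar -scalemxAl.
  by rewrite /a /qf /N !mulmxA.
have h2 : Y *m (Z *m u^T *m (u *m Z)) = N.
  by rewrite !mulmxA mulmxV // mul1mx /N ?mulmxA.
have key : (Y + r1 s u) *m (Z - c *: (Z *m u^T *m (u *m Z))) = 1%:M.
  rewrite /r1 mulmxDl !mulmxBr -!scalemxAr h2 -scalemxAl -scalemxAl h1 mulmxV //.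
  rewrite scalerA -/N.
  have hc : c + c * (s * a) = s.
    by rewrite /c; field.
  rewrite scalerA -addrA -[in RHS](addr0 1%:M); congr (_ + _).
  rewrite -!scaleNr -!scalerDl.
  have -> : - c + (s + - (c * s * a)) = 0.
    by rewrite -[X in _ + (X + _)]hc; ring.
  by rewrite scale0r.
have uY' : (Y + r1 s u) \in unitmx by case: (mulmx1_unit key).
by have := mulKmx uY' (Z - c *: (Z *m u^T *m (u *m Z))); rewrite key mulmx1.
Qed.



Lemma qf_inv_ge0 m (Y : 'M[R]_m) x : Y^T = Y -> PD Y -> 0 <= qf (invmx Y) x.
Proof.
move=> hs hp; have uY := PD_unit hp.
have ZT : (invmx Y)^T = invmx Y by rewrite trmx_inv hs.
have -> : qf (invmx Y) x = qf Y (x *m invmx Y).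
  by rewrite /qf trmx_mul ZT !mulmxA -(mulmxA (x *m invmx Y)) mulmxV // mulmx1.
have [->|nz] := eqVneq (x *m invmx Y) 0; last by apply/ltW/hp.
by rewrite /qf mul0mx mul0mx mxE.
Qed.

Lemma inv_decr1 m (Y : 'M[R]_m) s u x : Y^T = Y -> PD Y -> 0 <= s ->
  qf (invmx (Y + r1 s u)) x <= qf (invmx Y) x.
Proof.
move=> hs hp s0; have uY := PD_unit hp.
have ZT : (invmx Y)^T = invmx Y by rewrite trmx_inv hs.
have a0 := qf_inv_ge0 u hs hp.
have pos : 0 < 1 + s * qf (invmx Y) u by rewrite ltr_pwDl ?mulr_ge0.
rewrite SM //; last by rewrite (gt_eqF pos).
set M := (_ *: _).
have -> : qf (invmx Y - M) x = qf (invmx Y) x - qf M x.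
  by rewrite /qf mulmxBr mulmxBl !mxE.
rewrite gerDl oppr_le0 /M /qf -scalemxAr -scalemxAl mxE; apply: mulr_ge0; first by rewrite divr_ge0 // ltW.
have -> : x *m (invmx Y *m u^T *m (u *m invmx Y)) *m x^T =
   (x *m invmx Y *m u^T) *m (u *m invmx Y *m x^T) by rewrite !mulmxA.
rewrite mx11_mulE.
have -> : (u *m invmx Y *m x^T) 0 0 = (x *m invmx Y *m u^T) 0 0.
  by rewrite -tr11 !trmx_mul !trmxK ZT mulmxA.
by rewrite -expr2 sqr_ge0.
Qed.

Definition Dsum m (r : seq (R * 'rV[R]_m)) : 'M[R]_m := \sum_(p <- r) r1 p.1 p.2.
Definition nnr m (r : seq (R * 'rV[R]_m)) := all (fun p => 0 <= p.1) r.

Lemma Dsum_nil m : Dsum (nil : seq (R * 'rV[R]_m)) = 0.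
Proof. by rewrite /Dsum big_nil. Qed.

Lemma Dsum_cons m s (u : 'rV[R]_m) r : Dsum ((s, u) :: r) = r1 s u + Dsum r.
Proof. by rewrite /Dsum big_cons. Qed.

Lemma Dsum_cat m (r q : seq (R * 'rV[R]_m)) : Dsum (r ++ q) = Dsum r + Dsum q.
Proof. by rewrite /Dsum big_cat. Qed.

Lemma good_Dsum m (Y : 'M[R]_m) r : Y^T = Y -> PD Y -> nnr r ->
  (Y + Dsum r)^T = Y + Dsum r /\ PD (Y + Dsum r).
Proof.
move=> hs hp; elim: r => [|[s u] r IH] /=; first by rewrite Dsum_nil addr0.
case/andP=> s0 hr; have [hs' hp'] := IH hr.
rewrite Dsum_cons addrCA addrC; split.
  by rewrite linearD /= hs' /r1 linearZ /= trmx_mul trmxK.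
by apply: PD_add => // v; apply: qf_r1_ge0.
Qed.

Lemma inv_decr m (Y : 'M[R]_m) r x : Y^T = Y -> PD Y -> nnr r ->
  qf (invmx (Y + Dsum r)) x <= qf (invmx Y) x.
Proof.
move=> hs hp; elim: r => [|[s u] r IH] /=; first by rewrite Dsum_nil addr0.
case/andP=> s0 hr; have [hs' hp'] := good_Dsum hs hp hr.
rewrite Dsum_cons addrCA addrC; apply: le_trans (IH hr).
exact: inv_decr1.
Qed.

Lemma det_mono m (Y : 'M[R]_m) r : Y^T = Y -> PD Y -> nnr r ->
  \det Y <= \det (Y + Dsum r).
Proof.
move=> hs hp; elim: r => [|[s u] r IH] /=; first by rewrite Dsum_nil addr0.
case/andP=> s0 hr; have [hs' hp'] := good_Dsum hs hp hr.
rewrite Dsum_cons addrCA addrC MDL ?PD_unit //; apply: le_trans (IH hr) _.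
rewrite ler_peMr //; first exact/ltW/PD_det_gt0.
by rewrite lerDl mulr_ge0 // qf_inv_ge0.
Qed.

Lemma det_submod m (Y : 'M[R]_m) rp rq : Y^T = Y -> PD Y -> nnr rp -> nnr rq ->
  \det (Y + Dsum rp + Dsum rq) * \det Y <= \det (Y + Dsum rp) * \det (Y + Dsum rq).
Proof.
move=> hs hp hrp; elim: rq => [|[s u] r IH] /=.
  by rewrite !Dsum_nil !addr0 mulrC.
case/andP=> s0 hr; have [hs1 hp1] := good_Dsum hs hp hr.
have [hs2 hp2] := good_Dsum hs hp hrp.
have [hs3 hp3] := good_Dsum hs2 hp2 hr.
rewrite !Dsum_cons (addrCA _ (r1 s u)) addrC MDL ?PD_unit //.
rewrite (addrCA Y) (addrC (r1 s u) (Y + Dsum r)) MDL ?PD_unit //.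
rewrite mulrAC mulrA; apply: ler_pM.
- by rewrite mulr_ge0 // ltW // PD_det_gt0.
- by rewrite addr_ge0 // mulr_ge0 // qf_inv_ge0.
- exact: (IH hr).
- rewrite lerD2l ler_wpM2l //.
  have -> : Y + Dsum rp + Dsum r = (Y + Dsum r) + Dsum rp by rewrite addrAC.
  exact: inv_decr.
Qed.

End Frame.

Section Tens.
Variable R : realFieldType.

Lemma det_cast N K (e : N = K) (M : 'M[R]_N) : \det (castmx (e, e) M) = \det M.
Proof. by case: K / e; rewrite castmx_id. Qed.

Lemma tens1_block n p (B : 'M[R]_p.+1) :
  castmx (mulSn n p.+1, mulSn n p.+1) ((1%:M : 'M[R]_n.+1) *t B) =
  block_mx B 0 0 ((1%:M : 'M[R]_n) *t B).
Proof.
have hl (k : 'I_p.+1) : cast_ord (esym (mulSn n p.+1)) (lshift (n * p.+1) k)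
    = mxtens_index (ord0, k) by apply: val_inj.
have hr (i : 'I_n) (k : 'I_p.+1) :
    cast_ord (esym (mulSn n p.+1)) (rshift p.+1 (mxtens_index (i, k)))
    = mxtens_index (lift ord0 i, k).
  by apply: val_inj => /=; rewrite /bump /= add1n mulSn addnA.
apply/matrixP=> i j; rewrite castmxE /=.
case: (split_ordP i) => [i' ->|t ->]; case: (split_ordP j) => [j' ->|t' ->].
- by rewrite block_mxEul !hl tensmxE !mxE eqxx mul1r.
- case: (mxtens_indexP t') => a b.
  by rewrite block_mxEur hl hr tensmxE !mxE mul0r.
- case: (mxtens_indexP t) => a b.
  by rewrite block_mxEdl hl hr tensmxE !mxE mul0r.
- case: (mxtens_indexP t) => a b; case: (mxtens_indexP t') => c d.
  rewrite block_mxEdr !hr !tensmxE !mxE.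
  by rewrite (inj_eq (@lift_inj _ ord0)).
Qed.

Lemma det_tens1 n p (B : 'M[R]_p.+1) :
  \det ((1%:M : 'M[R]_n) *t B) = \det B ^+ n.
Proof.
elim: n => [|n IH]; first by rewrite expr0 det_mx00.
by rewrite -(det_cast (mulSn n p.+1)) tens1_block det_ublock IH exprS.
Qed.

End Tens.

Section Graph.
Variable R : realType.
Variables (n : nat) (U E : finType) (ends : E -> vtx n U * vtx n U) (w : E -> R).

Lemma sum_pred1b (q : vtx n U) (b : bool) (P : pred (vtx n U)) (c : R) :
  P =1 (fun y => (y == q) && b) -> \sum_(y | P y) c = if b then c else 0.
Proof.
move=> H; rewrite (eq_bigl _ _ H); case: b {H}.
  by rewrite (big_pred1 q) // => y; rewrite andbT.
by rewrite big_pred0 // => y; rewrite andbF.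
Qed.

Lemma diag_edge F (I : 'I_n.+1) (p q : vtx n U) (we : R) :
  \sum_(y | (y != inl I) && in_locF F y &&
     (((p == inl I) && (q == y)) || ((p == y) && (q == inl I)))) we
  = (if in_locF F p && in_locF F q then we else 0) *
    ((p == inl I)%:R - (q == inl I)%:R) ^+ 2.
Proof.
have [->|hp] := eqVneq p (inl I); have [->|hq] := eqVneq q (inl I).
- rewrite subrr expr0n /= mulr0 big_pred0 // => y.
  case: (eqVneq y (inl I)) => [->|ny] /=; rewrite ?eqxx ?andbF // ?andbT.
- rewrite (@sum_pred1b q (in_locF F q)) /=; last first.
    move=> y /=; case: (eqVneq y q) => [->|nyq]; first by rewrite hq /= andbT.
    by rewrite !andbF /= ?andbF.
  by rewrite subr0 expr1n mulr1.
- rewrite (@sum_pred1b p (in_locF F p)) /=; last first.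
    move=> y /=; case: (eqVneq y p) => [->|nyp]; first by rewrite hp !andbT.
    by rewrite /= !andbF.
  by rewrite andbT sub0r sqrrN expr1n mulr1.
- rewrite subrr expr0n /= mulr0 big_pred0 // => y.
  by rewrite /= !andbF.
Qed.

Lemma off_edge F (I J : 'I_n.+1) (p q : vtx n U) (we : R) : I != J ->
  - (if ((p == inl I) && (q == inl J)) || ((p == inl J) && (q == inl I)) then we else 0)
  = (if in_locF F p && in_locF F q then we else 0) *
    (((p == inl I)%:R - (q == inl I)%:R) * ((p == inl J)%:R - (q == inl J)%:R)).
Proof.
move=> nIJ.
have nIJ' : (inl I == inl J :> vtx n U) = false by apply/negbTE.
have nJI' : (inl J == inl I :> vtx n U) = false by rewrite eq_sym.
have [->|hp] := eqVneq p (inl I); have [->|hq] := eqVneq q (inl I);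
  rewrite ?eqxx ?nIJ' ?nJI' /=.
- by rewrite subrr mul0r mulr0 oppr0.
- have [->|hqJ] := eqVneq q (inl J); rewrite /= ?eqxx ?nIJ' ?nJI'.
    by ring.
  by rewrite subrr !mulr0 oppr0.
- have [->|hpJ] := eqVneq p (inl J); rewrite /= ?eqxx ?nIJ' ?nJI'.
    by ring.
  by rewrite subrr !mulr0 oppr0.
- by rewrite andbF subrr mul0r mulr0 oppr0.
Qed.



Definition bvec (T : pzRingType) (e : E) : 'rV[T]_n :=
  \row_i (((ends e).1 == inl (lift ord0 i))%:R - ((ends e).2 == inl (lift ord0 i))%:R).
Definition kap (F : {set U}) (e : E) : R :=
  if in_locF F (ends e).1 && in_locF F (ends e).2 then w e else 0.

Lemma Lloc_dec F :
  Lloc_tilde ends w F = \sum_e kap F e *: ((bvec R e)^T *m bvec R e).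
Proof.
apply/matrixP => i j; rewrite summxE !mxE.
under [RHS]eq_bigr do rewrite !mxE big_ord1 !mxE.
case: eqVneq => [hij|hij].
- have <- : i = j by apply: (lift_inj hij).
  rewrite /wsum (exchange_big_dep xpredT) //=.
  apply: eq_bigr => e _; rewrite /joins diag_edge /kap expr2.
  done.
- rewrite /wsum big_mkcond -sumrN; apply: eq_bigr => e _.
  by rewrite /joins (off_edge F _ _ _ hij).
Qed.


Definition uk (T : pzRingType) (b : 'rV[T]_n) (k : 'I_6) : 'rV[T]_(n * 6) :=
  \row_a (b 0 (mxtens_unindex a).1 * ((mxtens_unindex a).2 == k)%:R).

Lemma Me_eq (T : comPzRingType) (b : 'rV[T]_n) :
  (b^T *m b) *t (1%:M : 'M[T]_6) = \sum_(k < 6) (uk b k)^T *m uk b k.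
Proof.
apply/matrixP => a c; case: (mxtens_indexP a) => i k; case: (mxtens_indexP c) => j l.
rewrite tensmxE summxE !mxE big_ord1 !mxE.
under eq_bigr do rewrite !mxE big_ord1 !mxE !mxtens_indexK /=.
rewrite (bigD1 k) //= big1 ?addr0 => [|k' nk]; last first.
  by rewrite eq_sym (negbTE nk) !mulr0 mul0r.
rewrite eqxx mulr1 [l == k]eq_sym; case: (k == l); by rewrite ?mulr1 ?mulr0 ?mul0r.
Qed.

Lemma tens_suml (T : comPzRingType) (c : E -> T) (X : E -> 'M[T]_n) (B : 'M[T]_6) :
  (\sum_e c e *: X e) *t B = \sum_e c e *: (X e *t B).
Proof.
apply/matrixP => a b; case: (mxtens_indexP a) => i k; case: (mxtens_indexP b) => j l.
rewrite tensmxE !summxE mulr_suml; apply: eq_bigr => e _.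
by rewrite !mxE !mxtens_indexK /= mulrA.
Qed.

Definition Ysum (T : comPzRingType) (c : E -> T) : 'M[T]_(n * 6) :=
  \sum_e c e *: ((bvec T e)^T *m bvec T e *t (1%:M : 'M[T]_6)).

Definition rl (c : E -> R) : seq (R * 'rV[R]_(n * 6)) :=
  [seq (c e, uk (bvec R e) k) | e <- enum E, k <- enum 'I_6].

Lemma Ysum_Dsum c : Ysum c = Dsum (rl c).
Proof.
rewrite /Dsum /rl big_allpairs_dep /Ysum big_enum /=; apply: eq_bigr => e _.
rewrite big_enum /= Me_eq scaler_sumr; apply: eq_bigr => k _.
by rewrite /r1.
Qed.

Lemma nnr_rl c : (forall e, 0 <= c e) -> nnr (rl c).
Proof.
move=> H; apply/allP => p /allpairsP [[e k] [_ _ ->]] /=; exact: H.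
Qed.

Lemma YsumB (c d : E -> R) : Ysum (fun e => c e - d e) = Ysum c - Ysum d.
Proof.
by rewrite /Ysum -sumrB; apply: eq_bigr => e _; rewrite scalerBl.
Qed.

Lemma YsumD (c d : E -> R) : Ysum (fun e => c e + d e) = Ysum c + Ysum d.
Proof.
by rewrite /Ysum -big_split; apply: eq_bigr => e _; rewrite scalerDl.
Qed.

Lemma Ysum_ext (c d : E -> R) : (forall e, c e = d e) -> Ysum c = Ysum d.
Proof. by move=> H; apply: eq_bigr => e _; rewrite H. Qed.

Lemma Y_Ysum F : Lloc_tilde ends w F *t (1%:M : 'M[R]_6) = Ysum (kap F).
Proof. by rewrite Lloc_dec tens_suml. Qed.


Definition bl (e : E) : bool := is_local (ends e).1 && is_local (ends e).2.

Lemma connect_eq (T : finType) (r : rel T) (f : T -> R) :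
  (forall a b, r a b -> f a = f b) -> forall a b, connect r a b -> f a = f b.
Proof.
move=> H a b /connectP [p hp ->]; elim: p a hp => //= c p IH a /andP [hac hp].
by rewrite (H _ _ hac) IH.
Qed.

Definition Xof (x : 'rV[R]_n) (a : 'I_n.+1) : R :=
  if unlift ord0 a is Some i then x 0 i else 0.

Lemma sum_ind (x : 'rV[R]_n) (a : 'I_n.+1) :
  \sum_i ((inl a == inl (lift ord0 i) :> vtx n U)%:R * x 0 i) = Xof x a.
Proof.
rewrite /Xof; case: (unliftP ord0 a) => [i ->|->].
  rewrite (bigD1 i) //= eqxx mul1r big1 ?addr0 // => j nj.
  rewrite -(inj_eq (@lift_inj _ ord0)) in nj.
  have -> : (inl (lift ord0 i) == inl (lift ord0 j) :> vtx n U) = (lift ord0 i == lift ord0 j) by [].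
  rewrite eq_sym (negbTE nj).
  by rewrite mul0r.
by rewrite big1 // => j _; rewrite (_ : (inl ord0 == inl (lift ord0 j) :> vtx n U) = (ord0 == lift ord0 j)) // (negbTE (neq_lift _ _)) mul0r.
Qed.

Lemma bvec_x e (x : 'rV[R]_n) a b : ends e = (inl a, inl b) ->
  (bvec R e *m x^T) 0 0 = Xof x a - Xof x b.
Proof.
move=> he; rewrite mxE -!sum_ind -sumrB; apply: eq_bigr => i _.
by rewrite !mxE he /= mulrBl.
Qed.

Lemma conn_zero (hconn : local_connected ends) (x : 'rV[R]_n) :
  (forall e, bl e -> (bvec R e *m x^T) 0 0 = 0) -> x = 0.
Proof.
move=> H.
have HX : forall a b, [exists e, joins ends e (inl a) (inl b)] -> Xof x a = Xof x b.
  move=> a b /existsP [e]; rewrite /joins.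
  case he : (ends e) => [p q] /= /orP [] /andP [/eqP hp /eqP hq].
    have he' : ends e = (inl a, inl b) by rewrite he hp hq.
    have := H e; rewrite /bl he' /= => /(_ isT); rewrite (bvec_x x he').
    by move/eqP; rewrite subr_eq0 => /eqP.
  have he' : ends e = (inl b, inl a) by rewrite he hp hq.
  have := H e; rewrite /bl he' /= => /(_ isT); rewrite (bvec_x x he').
  by move/eqP; rewrite subr_eq0 => /eqP ->.
apply/rowP => i; rewrite mxE.
have := connect_eq HX (hconn ord0 (lift ord0 i)).
by rewrite /Xof liftK unlift_none.
Qed.



Lemma qf_sum m (I0 : Type) (r : seq I0) (P : pred I0) (F : I0 -> 'M[R]_m) v :
  qf (\sum_(i <- r | P i) F i) v = \sum_(i <- r | P i) qf (F i) v.
Proof. exact: (big_morph (fun Y => qf Y v) (fun Y P => qfD Y P v) (qf0 v)). Qed.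

Lemma qf_sq m (u v : 'rV[R]_m) : qf (u^T *m u) v = ((v *m u^T) 0 0) ^+ 2.
Proof. by have := qf_r1 1 u v; rewrite /r1 scale1r mul1r. Qed.

Definition xk (v : 'rV[R]_(n * 6)) (k : 'I_6) : 'rV[R]_n :=
  \row_i v 0 (mxtens_index (i, k)).

Lemma v_uk (b : 'rV[R]_n) v k :
  (v *m (uk b k)^T) 0 0 = (b *m (xk v k)^T) 0 0.
Proof.
rewrite !mxE.
under eq_bigr do rewrite !mxE.
rewrite (reindex (@mxtens_index n 6)) /=; last first.
  by exists (@mxtens_unindex n 6) => a _; [exact: mxtens_indexK | exact: mxtens_unindexK].
rewrite (eq_bigr (fun p : 'I_n * 'I_6 =>
   v 0 (mxtens_index (p.1, p.2)) * (b 0 p.1 * (p.2 == k)%:R))); last first.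
  case=> i j _; have := mxtens_indexK (i, j); rewrite /mxtens_unindex => -[-> ->] //.
rewrite -(pair_big xpredT xpredT (fun i j =>
   v 0 (mxtens_index (i, j)) * (b 0 i * (j == k)%:R))) /=.
apply: eq_bigr => i _; rewrite (bigD1 k) //= eqxx mulr1 big1 ?addr0.
  by rewrite !mxE mulrC.
by move=> j /negbTE ->; rewrite mulr0 mulr0.
Qed.

Lemma qf_Ysum (c : E -> R) v :
  qf (Ysum c) v = \sum_e c e * \sum_(k < 6) ((bvec R e *m (xk v k)^T) 0 0) ^+ 2.
Proof.
rewrite qf_sum; apply: eq_bigr => e _; rewrite qfZ Me_eq qf_sum.
by congr (_ * _); apply: eq_bigr => k _; rewrite qf_sq v_uk.
Qed.

Lemma Dsum_sym m (r : seq (R * 'rV[R]_m)) : (Dsum r)^T = Dsum r.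
Proof.
elim: r => [|[s u] r IH]; first by rewrite Dsum_nil trmx0.
by rewrite Dsum_cons linearD /= IH /r1 linearZ /= trmx_mul trmxK.
Qed.

Definition cbl (e : E) : R := (bl e)%:R.

Lemma PD_Y1 (hconn : local_connected ends) : PD (Ysum cbl).
Proof.
move=> v nz; rewrite qf_Ysum lt_def sumr_ge0 ?andbT; last first.
  by move=> e _; rewrite mulr_ge0 ?ler0n // sumr_ge0 // => k _; rewrite sqr_ge0.
apply: contra nz => /eqP h0.
have h1 := psumr_eq0P (fun e _ => mulr_ge0 (ler0n _ _) (sumr_ge0 _ (fun k _ => sqr_ge0 _))) h0.
have hk : forall k, xk v k = 0.
  move=> k; apply: conn_zero => // e hbl.
  have := h1 e isT; rewrite /cbl hbl mul1r => h2.
  have := psumr_eq0P (fun (i : 'I_6) (_ : true) => sqr_ge0 ((bvec R e *m (xk v i)^T) 0 0)) h2.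
  move=> /(_ k isT).
  by move/eqP; rewrite sqrf_eq0 => /eqP.
apply/eqP/rowP => a; case: (mxtens_indexP a) => i k.
by have := congr1 (fun x : 'rV[R]_n => x 0 i) (hk k); rewrite !mxE.
Qed.

Lemma map_Ysum : map_mx (intr : int -> R) (Ysum (fun e => (bl e)%:R)) = Ysum cbl.
Proof.
rewrite /Ysum map_mx_sum; apply: eq_bigr => e _.
rewrite map_mxZ map_mxT map_mxM -map_trmx map_mx1 rmorph_nat.
have -> : map_mx (intr : int -> R) (bvec int e) = bvec R e.
  by apply/rowP => i; rewrite !mxE rmorphB !rmorph_nat.
by [].
Qed.

Lemma det_Y1 (hconn : local_connected ends) : 1 <= \det (Ysum cbl).
Proof.
have := PD_det_gt0 (PD_Y1 hconn).
by rewrite -map_Ysum det_map_mx ltr0z ler1z gtz0_ge1.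
Qed.

End Graph.

Section Final.
Variable R : realType.
Variables (n : nat) (U E : finType) (ends : E -> vtx n U * vtx n U) (w : E -> R).
Hypothesis hw : forall e : E, 1 <= w e.

Lemma w_ge0 e : 0 <= w e.
Proof. exact: le_trans ler01 (hw e). Qed.

Lemma in_locF_mono (A B : {set U}) (v : vtx n U) : A \subset B -> in_locF A v -> in_locF B v.
Proof. by case: v => //= u /subsetP; apply. Qed.

Lemma kap_mono (A B : {set U}) e : A \subset B -> kap ends w A e <= kap ends w B e.
Proof.
move=> sAB; rewrite /kap.
case: ifP => [/andP [h1 h2]|_]; last by case: ifP => _; rewrite ?w_ge0.
by rewrite !(in_locF_mono sAB) //.
Qed.

Lemma kap0 e : 0 <= kap ends w set0 e - cbl R ends e.
Proof.
rewrite /kap /cbl /bl; case: (ends e) => [[p|p] [q|q]] /=; rewrite ?inE ?subr0 //.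
by rewrite subr_ge0 hw.
Qed.

Hypothesis hnouser : forall e : E, is_local (ends e).1 || is_local (ends e).2.

Lemma kap_UI (A B : {set U}) e :
  kap ends w (A :|: B) e + kap ends w (A :&: B) e = kap ends w A e + kap ends w B e.
Proof.
have := hnouser e; rewrite /kap; case: (ends e) => [[p|p] [q|q]] //= _;
  rewrite ?inE; try by [].
- by case: (q \in A); case: (q \in B); rewrite /= ?addr0 ?add0r.
- by case: (p \in A); case: (p \in B); rewrite /= ?addr0 ?add0r.
Qed.

End Final.

Theorem lemma5 (R : realType) (n : nat) (U E : finType)
  (ends : E -> vtx n U * vtx n U) (w : E -> R) (I : 'M[R]_6)
  (hw : forall e : E, 1 <= w e)
  (hnouser : forall e : E, is_local (ends e).1 || is_local (ends e).2)
  (hconn : local_connected ends)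
  (hI : sym_posdef I) (hdet : 1 <= \det I) :
  nonneg_fun (gfun ends w I) /\ monotone_nondecr (gfun ends w I)
  /\ submodular (gfun ends w I).
Proof.
pose Y F := Ysum ends (kap ends w F).
pose c := \det I ^+ n.
have hc1 : 1 <= c by apply: exprn_ege1.
have hc0 : 0 < c by apply: lt_le_trans ltr01 hc1.
have hg F : gfun ends w I F = ln (\det (Y F) * c).
  rewrite /gfun /Iloc_tilde.
  have -> : Lloc_tilde ends w F *t I =
            (Lloc_tilde ends w F *t 1%:M) *m (1%:M *t I).
    by rewrite tensmx_mul mulmx1 mul1mx.
  by rewrite det_mulmx Y_Ysum det_tens1.
pose Y1 := Ysum ends (cbl R ends).
have hY1s : Y1^T = Y1 by rewrite /Y1 Ysum_Dsum Dsum_sym.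
have hY1p : PD Y1 := PD_Y1 hconn.
have hY1d : 1 <= \det Y1 := det_Y1 R hconn.
pose r0 := rl ends (fun e => kap ends w set0 e - cbl R ends e).
have hr0 : nnr r0 by apply: nnr_rl => e; apply: kap0.
have [hG0s hG0p] := good_Dsum hY1s hY1p hr0.
have hdiff A B : Y B = Y A + Dsum (rl ends (fun e => kap ends w B e - kap ends w A e)).
  by rewrite -Ysum_Dsum YsumB addrC subrK.
have hYF F : Y F = (Y1 + Dsum r0) + Dsum (rl ends (fun e => kap ends w F e - kap ends w set0 e)).
  by rewrite -!Ysum_Dsum !YsumB (addrC Y1) subrK addrC subrK.
have hYgood F : (Y F)^T = Y F /\ PD (Y F).
  rewrite hYF; apply: good_Dsum => //; apply: nnr_rl => e.
  by rewrite subr_ge0 kap_mono // sub0set.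
have hYdet F : 1 <= \det (Y F).
  apply: le_trans hY1d _; apply: le_trans (det_mono hY1s hY1p hr0) _.
  rewrite hYF; apply: det_mono => //; apply: nnr_rl => e.
  by rewrite subr_ge0 kap_mono // sub0set.
have hYpos F : 0 < \det (Y F) by apply: lt_le_trans ltr01 (hYdet F).
split; [|split].
- move=> F; rewrite hg; apply: ln_ge0; exact: mulr_ege1.
- move=> A B sAB; rewrite !hg ler_ln ?posrE ?mulr_gt0 // ler_pM2r //.
  have [hs hp] := hYgood A.
  rewrite (hdiff A B); apply: det_mono => //; apply: nnr_rl => e.
  by rewrite subr_ge0 kap_mono.
- move=> A B; rewrite !hg.
  have [hs hp] := hYgood (A :&: B).
  have hP : nnr (rl ends (fun e => kap ends w A e - kap ends w (A :&: B) e)).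
    by apply: nnr_rl => e; rewrite subr_ge0 kap_mono // subsetIl.
  have hQ : nnr (rl ends (fun e => kap ends w B e - kap ends w (A :&: B) e)).
    by apply: nnr_rl => e; rewrite subr_ge0 kap_mono // subsetIr.
  have key := det_submod hs hp hP hQ.
  have eU : Y (A :|: B) = Y (A :&: B)
      + Dsum (rl ends (fun e => kap ends w A e - kap ends w (A :&: B) e))
      + Dsum (rl ends (fun e => kap ends w B e - kap ends w (A :&: B) e)).
    rewrite -!Ysum_Dsum -!YsumD; apply: Ysum_ext => e.
    have := kap_UI w hnouser A B e; lra.
  rewrite -eU -!hdiff in key.
  rewrite -!lnM ?posrE ?mulr_gt0 // ler_ln ?posrE ?mulr_gt0 //.
  rewrite mulrACA [X in _ <= X]mulrACA ler_pM2r ?mulr_gt0 //.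
Qed.
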